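(* Let $\Theta$ and $R$ be finite sets and $s_1:\Theta\to\Delta(R)$. Then $s_1$ is monotone with respect to some pair of total orders $(\succsim_\Theta,\succsim_R)$ if and only if the bipartite graph $G(s_1)$ is acyclic and does not contain a forbidden triple.
   Context: $s_1$ is monotone w.r.t. total orders $(\succsim_\Theta,\succsim_R)$ if for any $\theta\succ\theta'$, $r\in\mathrm{supp}(s_1(\theta))$, $r'\in\mathrm{supp}(s_1(\theta'))$, one has $r\succsim r'$. $G(s_1)$ is the bipartite graph with vertex classes $\Theta$ and $R$ in which $\theta$ and $r$ are joined iff $r\in\mathrm{supp}(s_1(\theta))$. A forbidden triple for $s_1$ is either (1) three distinct $r_1,r_2,r_3\in R$ and four distinct $\theta_1,\dots,\theta_4\in\Theta$ with $r_k\in\mathrm{supp}(s_1(\theta_k))$ for $k=1,2,3$ and $\{r_1,r_2,r_3\}\subset\mathrm{supp}(s_1(\theta_4))$; or (2) three distinct $\theta_1,\theta_2,\theta_3\in\Theta$ and four distinct $r_1,\dots,r_4\in R$ with $\{r_k,r_4\}\subset\mathrm{supp}(s_1(\theta_k))$ for $k=1,2,3$. *)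

(* Defs.v *)
From mathcomp Require Import all_boot all_order all_algebra.
Set Implicit Arguments. Unset Strict Implicit. Unset Printing Implicit Defensive.
Import Order.TTheory GRing.Theory Num.Theory.
Local Open Scope ring_scope.

Definition is_distr (F : realFieldType) (R : finType) (p : R -> F) : Prop :=
  (forall r, 0 <= p r) /\ \sum_(r : R) p r = 1.

Definition supp (F : realFieldType) (Th R : finType) (s1 : Th -> R -> F) (th : Th)
  : {set R} := [set r | s1 th r != 0].

Definition total_order (T : finType) (le : rel T) : Prop :=
  [/\ reflexive le, antisymmetric le, transitive le & total le].

Definition monotone (F : realFieldType) (Th R : finType) (s1 : Th -> R -> F)
  (leT : rel Th) (leR : rel R) : Prop :=
  forall th th' r r', leT th' th -> ~~ leT th th' ->
    r \in supp s1 th -> r' \in supp s1 th' -> leR r' r.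

Definition Gadj (F : realFieldType) (Th R : finType) (s1 : Th -> R -> F)
  : rel (Th + R) :=
  fun u v => match u, v with
             | inl th, inr r => r \in supp s1 th
             | inr r, inl th => r \in supp s1 th
             | _, _ => false
             end.

Definition acyclic_graph (V : finType) (e : rel V) : Prop :=
  forall c : seq V, (3 <= size c)%N -> ~~ ucycleb e c.

Definition forbidden_triple (F : realFieldType) (Th R : finType)
  (s1 : Th -> R -> F) : Prop :=
  (exists (r1 r2 r3 : R) (t1 t2 t3 t4 : Th),
      uniq [:: r1; r2; r3] /\ uniq [:: t1; t2; t3; t4] /\
      r1 \in supp s1 t1 /\ r2 \in supp s1 t2 /\ r3 \in supp s1 t3 /\
      [/\ r1 \in supp s1 t4, r2 \in supp s1 t4 & r3 \in supp s1 t4])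
  \/
  (exists (t1 t2 t3 : Th) (r1 r2 r3 r4 : R),
      uniq [:: t1; t2; t3] /\ uniq [:: r1; r2; r3; r4] /\
      [/\ r1 \in supp s1 t1, r2 \in supp s1 t2 & r3 \in supp s1 t3] /\
      [/\ r4 \in supp s1 t1, r4 \in supp s1 t2 & r4 \in supp s1 t3]).

(* Main.v *)
Require Import Defs.
From mathcomp Require Import all_boot all_order all_algebra zify.
Set Implicit Arguments. Unset Strict Implicit. Unset Printing Implicit Defensive.
Import Order.TTheory GRing.Theory Num.Theory.
Local Open Scope ring_scope.


Definition noncross {A B : finType} (E : A -> B -> bool) (rA : A -> int) (rB : B -> int) :=
  forall a a' b b', E a b -> E a' b' -> rA a' < rA a -> rB b' <= rB b.

Definition claw {A B : finType} (E : A -> B -> bool) := exists b a1 a2 a3 b1 b2 b3,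
  uniq [:: a1; a2; a3] /\ uniq [:: b1; b2; b3; b] /\
  [/\ E a1 b, E a2 b & E a3 b] /\ [/\ E a1 b1, E a2 b2 & E a3 b3].

Definition gadj {A B : finType} (E : A -> B -> bool) : rel (A + B) :=
  fun u v => match u, v with
             | inl a, inr b => E a b
             | inr b, inl a => E a b
             | _, _ => false
             end.

Lemma noncross_T (A B : finType) (E : A -> B -> bool) (rA : A -> int) (rB : B -> int) : noncross E rA rB -> noncross (fun b a => E a b) rB rA.
Proof.
move=> H x x' y y' Eyx Ey'x' lt; rewrite leNgt; apply/negP => lt2.
by have := H _ _ _ _ Ey'x' Eyx lt2; rewrite leNgt lt.
Qed.

Lemma noncross_rev (A B : finType) (E : A -> B -> bool) (rA : A -> int) (rB : B -> int) : noncross E rA rB ->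
  noncross E (fun a => - rA a) (fun b => - rB b).
Proof.
move=> H a a' b b' Eab Eab' lt; rewrite lerN2; apply: (H _ _ _ _ Eab' Eab).
by rewrite -ltrN2.
Qed.

Lemma noncross_ext (A B : finType) (E : A -> B -> bool) (rA rA' : A -> int) (rB rB' : B -> int) : (forall a, rA a = rA' a) -> (forall b, rB b = rB' b) ->
  noncross E rA rB -> noncross E rA' rB'.
Proof. by move=> HA HB H a a' b b'; rewrite -!HA -!HB; apply: H. Qed.

Lemma noncross_sub (A B : finType) (E E' : A -> B -> bool) (rA : A -> int) (rB : B -> int) : (forall a b, E a b -> E' a b) ->
  noncross E' rA rB -> noncross E rA rB.
Proof. by move=> S H a a' b b' /S h1 /S h2; apply: H. Qed.

Lemma claw_sub (A B : finType) (E E' : A -> B -> bool) : (forall a b, E a b -> E' a b) ->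
  claw E -> claw E'.
Proof.
move=> S [b [a1 [a2 [a3 [b1 [b2 [b3 [u1 [u2 [[h1 h2 h3] [h4 h5 h6]]]]]]]]]]].
by exists b, a1, a2, a3, b1, b2, b3; do 2 split => //; split; split; apply: S.
Qed.

Lemma noncross_noclaw (A B : finType) (E : A -> B -> bool) (rA : A -> int) (rB : B -> int) : injective rA -> injective rB -> noncross E rA rB -> ~ claw E.
Proof.
move=> inj injB H [b [a1 [a2 [a3 [b1 [b2 [b3 [u1 [u2 [[h1 h2 h3] [h4 h5 h6]]]]]]]]]]].
have mid : forall x y z y', E x b -> E y b -> E z b -> E y y' -> y' != b ->
    rA x < rA y -> rA y < rA z -> False.
  move=> x y z y' Ex Ey Ez Ey' ne l1 l2.
  have c1 := H _ _ _ _ Ey' Ex l1.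
  have c2 := H _ _ _ _ Ez Ey' l2.
  by move: ne; rewrite -(inj_eq injB) => /negP; apply; apply/eqP/le_anti; rewrite c1 c2.
move: u1 u2; rewrite /= !inE !negb_or => /and3P[/andP[n12 n13] n23 _].
move=> /and4P[/and3P[_ _ nb1] /andP[_ nb2] nb3 _].
have d12 : rA a1 != rA a2 by rewrite (inj_eq inj).
have d13 : rA a1 != rA a3 by rewrite (inj_eq inj).
have d23 : rA a2 != rA a3 by rewrite (inj_eq inj).
have : (rA a1 < rA a2 < rA a3) \/ (rA a1 < rA a3 < rA a2) \/ (rA a2 < rA a1 < rA a3) \/
       (rA a2 < rA a3 < rA a1) \/ (rA a3 < rA a1 < rA a2) \/ (rA a3 < rA a2 < rA a1) by lia.
case=> [/andP[l1 l2]|[/andP[l1 l2]|[/andP[l1 l2]|[/andP[l1 l2]|[/andP[l1 l2]|/andP[l1 l2]]]]]].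
- exact: (mid _ _ _ _ h1 h2 h3 h5 nb2 l1 l2).
- exact: (mid _ _ _ _ h1 h3 h2 h6 nb3 l1 l2).
- exact: (mid _ _ _ _ h2 h1 h3 h4 nb1 l1 l2).
- exact: (mid _ _ _ _ h2 h3 h1 h6 nb3 l1 l2).
- exact: (mid _ _ _ _ h3 h1 h2 h4 nb1 l1 l2).
- exact: (mid _ _ _ _ h3 h2 h1 h5 nb2 l1 l2).
Qed.



Lemma ex_maxz (T : finType) (P : pred T) (f : T -> int) :
  (exists x, P x) -> exists x, P x /\ forall y, P y -> f y <= f x.
Proof.
case=> x0 Px0.
case: (@arg_maxP _ _ T x0 P f Px0) => x Px H.
by exists x; split => // y /H.
Qed.

Lemma ex_minz (T : finType) (P : pred T) (f : T -> int) :
  (exists x, P x) -> exists x, P x /\ forall y, P y -> f x <= f y.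
Proof.
move=> /(ex_maxz (fun x => - f x)) [x [Px H]]; exists x; split => // y /H.
by rewrite lerN2.
Qed.

Lemma noncross_acyclic (A B : finType) (E : A -> B -> bool) (rA : A -> int) (rB : B -> int) :
  injective rA -> injective rB -> noncross E rA rB ->
  forall c, (3 <= size c)%N -> ~~ ucycleb (gadj E) c.
Proof.
move=> injA injB H c sz; apply/negP => /andP[cyc un].
have [a0 a0c] : exists a0, inl a0 \in c.
  case: c sz cyc {un} => [|x [|y s]] //= _.
  rewrite /cycle /= => /andP[xy _].
  case: x xy => [a|b]; first by exists a; rewrite inE eqxx.
  by case: y => [a|b'] // _; exists a; rewrite !inE eqxx orbT.
have [a [ac amax]] := ex_maxz rA (ex_intro (fun a => inl a \in c) a0 a0c).
have := rot_index ac.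
set c' := rot _ c => ec'.
have cyc' : cycle (gadj E) c' by rewrite rot_cycle.
have un' : uniq c' by rewrite rot_uniq.
have sz' : (3 <= size c')%N by rewrite size_rot.
have memc : forall x, x \in c' -> x \in c by move=> x; rewrite mem_rot.
move: cyc' un' sz' memc; rewrite ec'.
move: (drop _ _ ++ _) => t.
case: t => [|z t1] //; case/lastP: t1 => [|t3 l] // cyc' un' _ memc.
move: cyc'; rewrite /cycle rcons_cons /= rcons_path last_rcons rcons_path => /and3P[az /andP[pt3 lt3] la].
case: z az pt3 lt3 un' memc => [z|b1] //= ab1 pt3 lt3 un' memc.
case: l la lt3 un' memc => [l|b2] //= ab2 lt3 un' memc.
case: t3 pt3 lt3 un' memc => [|w t4] //= /andP[b1w pt4] lt3 un' memc.
case: w b1w pt4 lt3 un' memc => [a1|w] //= a1b1 pt4 lt3 un' memc.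
move: lt3; set y := last _ t4 => lt3.
have ymem : y \in inl a1 :: t4 by apply: mem_last.
case: y lt3 ymem => [a2|y] //= a2b2 ymem.
have U : forall (T : eqType) (x : T) s y, uniq (x :: s) -> y \in s -> x != y.
  by move=> T x s y /= /andP[nx _] ys; apply: contraNneq nx => ->.
have ne1 : a1 != a.
  rewrite eq_sym -(inj_eq (@inl_inj A B)); apply: (U _ _ _ _ un').
  by rewrite !inE eqxx !orbT.
have ne2 : a2 != a.
  rewrite eq_sym -(inj_eq (@inl_inj A B)); apply: (U _ _ _ _ un').
  by move: ymem; rewrite !inE mem_rcons !inE => /orP[->|->]; rewrite ?orbT.
have nb : inr b1 != inr b2 :> A + B.
  by move: un' => /= /andP[_ un2]; apply: (U _ _ _ _ un2); rewrite !inE mem_rcons !inE eqxx !orbT.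
have m1 : inl a1 \in c by apply: memc; rewrite !inE eqxx !orbT.
have m2 : inl a2 \in c.
  apply: memc; move: ymem; rewrite !inE mem_rcons !inE => /orP[->|->]; rewrite ?orbT //.
have l1 : rA a1 < rA a by rewrite lt_neqAle (inj_eq injA) ne1 amax.
have l2 : rA a2 < rA a by rewrite lt_neqAle (inj_eq injA) ne2 amax.
have c1 := H _ _ _ _ ab1 a2b2 l2.
have c2 := H _ _ _ _ ab2 a1b1 l1.
move: nb; rewrite (inj_eq (@inr_inj A B)) -(inj_eq injB) => /negP; apply.
by apply/eqP/le_anti; rewrite c1 c2.
Qed.


Lemma uniq_size_card (T : finType) (s : seq T) : uniq s -> (size s <= #|T|)%N.
Proof. by move/card_uniqP => <-; apply: max_card. Qed.

Lemma leaf_step (V : finType) (e : rel V) : symmetric e -> irreflexive e ->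
  (forall c, (3 <= size c)%N -> ~~ ucycleb e c) -> forall x p, path e x p -> uniq (x :: p) ->
  (0 < size p)%N ->
  (exists z, e x z && (z \notin x :: p)) \/ (exists y, e x y /\ forall z, e x z -> z = y).
Proof.
move=> sym irr acyc x [|y p'] // pth un _.
case: (pickP (fun z => e x z && (z \notin x :: y :: p'))) => [z Hz|Hno]; first by left; exists z.
right; exists y; split; first by case/andP: pth.
move=> z xz; have := Hno z; rewrite xz /= => /negbFE.
rewrite inE => /orP[/eqP exz|]; first by move: xz; rewrite exz irr.
rewrite inE => /orP[/eqP //|zp].
case/splitPr: zp pth un => p1 p2 pth un.
have := acyc (x :: y :: (p1 ++ [:: z])); rewrite /= size_cat /= addn1 ltnS ltnS ltnS leq0n.
move=> /(_ isT) /negP; case; apply/andP; split.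
  rewrite /cycle rcons_path; apply/andP; split.
    move: pth; have -> : y :: p1 ++ z :: p2 = (y :: p1 ++ [:: z]) ++ p2 by rewrite /= -catA.
    by rewrite cat_path => /andP[].
  by rewrite /= cats1 last_rcons sym.
move: un; have -> : [:: x, y & p1 ++ z :: p2] = [:: x, y & p1 ++ [:: z]] ++ p2 by rewrite /= -catA.
by rewrite cat_uniq => /andP[].
Qed.

Lemma leaf_ex (V : finType) (e : rel V) : symmetric e -> irreflexive e ->
  (forall c, (3 <= size c)%N -> ~~ ucycleb e c) -> forall x0 y0, e x0 y0 ->
  exists x y, e x y /\ forall z, e x z -> z = y.
Proof.
move=> sym irr acyc x0 y0 e0.
suff: forall n x p, path e x p -> uniq (x :: p) -> (0 < size p)%N -> (#|V| - size p <= n)%N ->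
  exists x y, e x y /\ forall z, e x z -> z = y.
  move=> H; apply: (H #|V| x0 [:: y0]) => //=; first by rewrite e0.
  - by rewrite inE andbT; apply: contraFN (irr x0) => /eqP exy; rewrite {2}exy.
  - lia.
elim=> [|n IH] x p pth un sz le.
  by move: (uniq_size_card un) => /= h1; move: le; rewrite leqn0 subn_eq0 => le; have := leq_trans h1 le; rewrite ltnn.
case: (leaf_step sym irr acyc pth un sz) => [[z /andP[xz zn]]|[y H]]; last by exists x, y.
have U2 : uniq (z :: x :: p) by rewrite /= zn.
apply: (IH z (x :: p)) => //.
- by rewrite /= sym xz.
- move: le; rewrite /= subnS.
  by case: (#|V| - size p)%N.
Qed.


Lemma place_above (A B : finType) (E : A -> B -> bool) (u : A) (v m : B)
  (rA : A -> int) (rB : B -> int) :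
  injective rB -> noncross E rA rB -> (forall a, ~~ E a v) -> E u m ->
  (forall a b, E a b -> rA u < rA a -> rB m < rB b) ->
  exists rB', injective rB' /\ noncross (fun a b => E a b || (a == u) && (b == v)) rA rB'.
Proof.
move=> injB H hv um hm.
have nv : forall a b, E a b -> b != v by move=> a b Eab; apply: contraNneq (hv a) => <-.
exists (fun b => if b == v then rB m + 1 else if rB m < rB b then rB b + 1 else rB b); split.
  move=> x y; case: eqP => [->|nx]; case: eqP => [->|ny] //.
  - by case: ifP => h e; lia.
  - by case: ifP => h e; lia.
  - by case: ifP; case: ifP => h1 h2 e; apply: injB; lia.
move=> a a' b b' /orP[Eab|/andP[/eqP-> /eqP->]] /orP[Eab'|/andP[/eqP-> /eqP->]] lt.
- have := H _ _ _ _ Eab Eab' lt.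
  by rewrite (negbTE (nv _ _ Eab)) (negbTE (nv _ _ Eab')); case: ifP; case: ifP => h1 h2 h3; lia.
- have := hm _ _ Eab lt.
  by rewrite eqxx (negbTE (nv _ _ Eab)); case: ifP => h1 h2; lia.
- have := H _ _ _ _ um Eab' lt.
  by rewrite eqxx (negbTE (nv _ _ Eab')); case: ifP => h1 h2; lia.
- by rewrite ltxx in lt.
Qed.

Lemma place_below (A B : finType) (E : A -> B -> bool) (u : A) (v m : B)
  (rA : A -> int) (rB : B -> int) :
  injective rB -> noncross E rA rB -> (forall a, ~~ E a v) -> E u m ->
  (forall a b, E a b -> rA a < rA u -> rB b < rB m) ->
  exists rB', injective rB' /\ noncross (fun a b => E a b || (a == u) && (b == v)) rA rB'.
Proof.
move=> injB H hv um hm.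
have [] := @place_above A B E u v m (fun a => - rA a) (fun b => - rB b).
- by move=> x y /oppr_inj /injB.
- exact: noncross_rev.
- exact: hv.
- exact: um.
- by move=> a b Eab; rewrite !ltrN2; apply: hm.
move=> rB' [inj' H']; exists (fun b => - rB' b); split.
  by move=> x y /oppr_inj /inj'.
apply: (noncross_ext _ _ (noncross_rev H')) => ?; lia.
Qed.

Lemma move_below (A B : finType) (E : A -> B -> bool) (u w : A) (m : B)
  (rA : A -> int) (rB : B -> int) :
  injective rA -> noncross E rA rB -> u != w ->
  (forall b, E u b -> b = m) -> E w m -> (forall b, E w b -> b = m) ->
  exists rA', [/\ injective rA', noncross E rA' rB &
    forall a, rA' a < rA' u -> a != u /\ rA a < rA w].
Proof.
move=> injA H uw hu wm hw.
pose rA' a := if a == u then rA w else if rA w <= rA a then rA a + 1 else rA a.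
have ne : forall a, a != u -> (rA' a < rA' u) = (rA a < rA w).
  by move=> a au; rewrite /rA' (negbTE au) eqxx; case: ifP => h; apply/idP/idP; lia.
exists rA'; split.
- move=> x y; rewrite /rA'; case: eqP => [->|nx]; case: eqP => [->|ny] //.
  + by case: ifP => h e; lia.
  + by case: ifP => h e; lia.
  + by case: ifP; case: ifP => h1 h2 e; apply: injA; lia.
- move=> a a' b b' Eab Eab' lt.
  case: (a =P u) => [eau|nau]; case: (a' =P u) => [ea'u|na'u].
  + by move: lt; rewrite eau ea'u ltxx.
  + move: Eab; rewrite eau => /hu ->.
    have l2 : rA a' < rA w by rewrite -ne; [rewrite -eau | apply/eqP].
    exact: H _ _ _ _ wm Eab' l2.
  + move: Eab'; rewrite ea'u => /hu ->.
    have l2 : rA w <= rA a.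
      move: lt; rewrite ea'u /rA' eqxx; case: eqP => // _; case: ifP => h1 h2; lia.
    move: l2; rewrite le_eqVlt => /orP[/eqP e|l2].
      by move/injA: e => ew; move: Eab; rewrite -ew => /hw ->.
    exact: H _ _ _ _ Eab wm l2.
  + apply: H Eab Eab' _; move: lt; rewrite /rA'.
    move/eqP/negbTE: nau => ->; move/eqP/negbTE: na'u => ->.
    by case: ifP; case: ifP => h1 h2 h3; lia.
- move=> a lt; case: (a =P u) => [eau|/eqP nau]; first by move: lt; rewrite eau ltxx.
  by split => //; rewrite -ne.
Qed.


Lemma move_above (A B : finType) (E : A -> B -> bool) (u w : A) (m : B)
  (rA : A -> int) (rB : B -> int) :
  injective rA -> noncross E rA rB -> u != w ->
  (forall b, E u b -> b = m) -> E w m -> (forall b, E w b -> b = m) ->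
  exists rA', [/\ injective rA', noncross E rA' rB &
    forall a, rA' u < rA' a -> a != u /\ rA w < rA a].
Proof.
move=> injA H uw hu wm hw.
have [] := @move_below A B E u w m (fun a => - rA a) (fun b => - rB b).
- by move=> x y /oppr_inj /injA.
- exact: noncross_rev.
- exact: uw.
- exact: hu.
- exact: wm.
- exact: hw.
move=> rA' [inj' H' P']; exists (fun a => - rA' a); split.
- by move=> x y /oppr_inj /inj'.
- by apply: (noncross_ext _ _ (noncross_rev H')) => ?; lia.
- by move=> a; rewrite ltrN2 => /P' [? l]; split => //; lia.
Qed.

Lemma ins (A B : finType) (E : A -> B -> bool) (u : A) (v : B)
  (rA : A -> int) (rB : B -> int) :
  injective rA -> injective rB -> noncross E rA rB -> (forall a, ~~ E a v) ->
  ~ claw (fun a b => E a b || (a == u) && (b == v)) ->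
  exists rA' rB', [/\ injective rA', injective rB' &
     noncross (fun a b => E a b || (a == u) && (b == v)) rA' rB'].
Proof.
move=> injA injB H hv hclaw.
have nv : forall a b, E a b -> b != v by move=> a b Eab; apply: contraNneq (hv a) => <-.
have neqA : forall a a', rA a < rA a' -> (a == a') = false.
  by move=> a a' l; apply/eqP => e; move: l; rewrite e ltxx.
have neqB : forall b b', rB b < rB b' -> (b == b') = false.
  by move=> b b' l; apply/eqP => e; move: l; rewrite e ltxx.
have lift : (exists rB', injective rB' /\ noncross (fun a b => E a b || (a == u) && (b == v)) rA rB') ->
  exists rA' rB', [/\ injective rA', injective rB' &
     noncross (fun a b => E a b || (a == u) && (b == v)) rA' rB'].
  by case=> rB' [i n]; exists rA, rB'.
case: (pickP (E u)) => [m0 um0|nu]; last first.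
  have [amax [_ Hamax]] := ex_maxz rA (ex_intro (fun _ : A => true) u isT).
  have [bmax [_ Hbmax]] := ex_maxz rB (ex_intro (fun _ : B => true) v isT).
  exists (fun a => if a == u then rA amax + 1 else rA a).
  exists (fun b => if b == v then rB bmax + 1 else rB b); split.
  - move=> x y; case: eqP => [->|nx]; case: eqP => [->|ny] //.
    + by move=> e; have := Hamax y isT; lia.
    + by move=> e; have := Hamax x isT; lia.
    + exact: injA.
  - move=> x y; case: eqP => [->|nx]; case: eqP => [->|ny] //.
    + by move=> e; have := Hbmax y isT; lia.
    + by move=> e; have := Hbmax x isT; lia.
    + exact: injB.
  have nuu : forall a b, E a b -> a != u by move=> a b Eab; apply: contraTneq Eab => ->; rewrite nu.
  move=> a a' b b' /orP[Eab|/andP[/eqP-> /eqP->]] /orP[Eab'|/andP[/eqP-> /eqP->]]; rewrite ?eqxx.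
  - rewrite (negbTE (nuu _ _ Eab)) (negbTE (nuu _ _ Eab')) (negbTE (nv _ _ Eab)) (negbTE (nv _ _ Eab')).
    exact: H.
  - by rewrite (negbTE (nuu _ _ Eab)) => lt; have := Hamax a isT; lia.
  - by rewrite (negbTE (nv _ _ Eab')) => _; have := Hbmax b' isT; lia.
  - by rewrite ltxx.
have [m1 [um1 Hm1]] := ex_minz rB (ex_intro (E u) m0 um0).
have [m2 [um2 Hm2]] := ex_maxz rB (ex_intro (E u) m0 um0).
case: (m1 =P m2) => [e12|n12]; last first.
  apply: lift; apply: (place_above injB H hv um1) => a b Eab l.
  have := H _ _ _ _ Eab um2 l; have := Hm1 _ um2.
  have : rB m1 != rB m2 by rewrite (inj_eq injB); apply/eqP.
  lia.
have hu : forall b, E u b -> b = m1.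
  move=> b ub; apply: injB; have := Hm1 _ ub; have := Hm2 _ ub; rewrite -e12; lia.
case: (pickP (fun a => E a m1 && (rA u < rA a))) => [a2 /andP[a2m la2]|nabove]; last first.
  apply: lift; apply: (place_above injB H hv um1) => a b Eab l.
  have := H _ _ _ _ Eab um1 l; rewrite le_eqVlt => /orP[/eqP e|//].
  by move: (nabove a) Eab; rewrite /= l andbT -(injB _ _ e) => ->.
case: (pickP (fun a => E a m1 && (rA a < rA u))) => [a1 /andP[a1m la1]|nbelow]; last first.
  apply: lift; apply: (place_below injB H hv um1) => a b Eab l.
  have := H _ _ _ _ um1 Eab l; rewrite le_eqVlt => /orP[/eqP e|//].
  by move: (nbelow a) Eab; rewrite /= l andbT (injB _ _ e) => ->.
have [wlo [wlom Hwlo]] := ex_minz rA (ex_intro (fun a => E a m1) a1 a1m).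
have [whi [whim Hwhi]] := ex_maxz rA (ex_intro (fun a => E a m1) a2 a2m).
have lwlo : rA wlo < rA u by have := Hwlo _ a1m; lia.
have lwhi : rA u < rA whi by have := Hwhi _ a2m; lia.
case: (pickP (fun b => E wlo b && (b != m1))) => [x /andP[wx xm]|wlo_leaf]; last first.
  have hw : forall b, E wlo b -> b = m1.
    by move=> b wb; apply/eqP; move: (wlo_leaf b); rewrite /= wb /= => /negbFE.
  have uw : u != wlo by rewrite eq_sym neqA.
  have [rA' [inj' H' P']] := move_below injA H uw hu wlom hw.
  have [rB' [inj2 H2]] : exists rB', injective rB' /\
      noncross (fun a b => E a b || (a == u) && (b == v)) rA' rB'.
    apply: (place_below injB H' hv um1) => a b Eab /P' [au la].
    have := H _ _ _ _ wlom Eab la; rewrite le_eqVlt => /orP[/eqP e|//].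
    by move: Eab; rewrite (injB _ _ e) => /Hwlo; lia.
  by exists rA', rB'.
case: (pickP (fun b => E whi b && (b != m1))) => [y /andP[wy ym]|whi_leaf]; last first.
  have hw : forall b, E whi b -> b = m1.
    by move=> b wb; apply/eqP; move: (whi_leaf b); rewrite /= wb /= => /negbFE.
  have uw : u != whi by rewrite neqA.
  have [rA' [inj' H' P']] := move_above injA H uw hu whim hw.
  have [rB' [inj2 H2]] : exists rB', injective rB' /\
      noncross (fun a b => E a b || (a == u) && (b == v)) rA' rB'.
    apply: (place_above injB H' hv um1) => a b Eab /P' [au la].
    have := H _ _ _ _ Eab whim la; rewrite le_eqVlt => /orP[/eqP e|//].
    by move: Eab; rewrite -(injB _ _ e) => /Hwhi; lia.
  by exists rA', rB'.
exfalso; apply: hclaw.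
have lwh : rA wlo < rA whi by lia.
have lx : rB x < rB m1.
  have := H _ _ _ _ whim wx lwh; rewrite le_eqVlt => /orP[/eqP e|//].
  by move: xm; rewrite (injB _ _ e) eqxx.
have ly : rB m1 < rB y.
  have := H _ _ _ _ wy wlom lwh; rewrite le_eqVlt => /orP[/eqP e|//].
  by move: ym; rewrite (injB _ _ e) eqxx.
exists m1, wlo, u, whi, x, v, y; split; last split; last split.
- by rewrite /= !inE !neqA //; lia.
- rewrite /= !inE !negb_or (neqB x m1) // (neqB x y) ?(neqB m1 y) //; last lia.
  have n1 : (v != y) by rewrite eq_sym (nv _ _ wy).
  have n2 : (v != m1) by rewrite eq_sym (nv _ _ um1).
  have n3 : (y != m1) by apply/eqP => e; move: ly; rewrite e ltxx.
  by rewrite (nv _ _ wx) n1 n2 n3.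
- by rewrite wlom um1 whim.

- by rewrite wx wy !eqxx orbT.
Qed.


Lemma main_ex (A B : finType) n : forall E : A -> B -> bool,
  (#|[set p : A * B | E p.1 p.2]| <= n)%N -> ~ claw E -> ~ claw (fun b a => E a b) ->
  (forall c, (3 <= size c)%N -> ~~ ucycleb (gadj E) c) ->
  exists rA rB, [/\ injective rA, injective rB & noncross E rA rB].
Proof.
have inj0 : forall T : finType, injective (fun x : T => Posz (enum_rank x)).
  by move=> T x y [] /ord_inj /enum_rank_inj.
elim: n => [|n IH] E hcard hc1 hc2 acyc.
  exists (fun x => Posz (enum_rank x)), (fun x => Posz (enum_rank x)); split => //.
  move=> a a' b b' Eab; move: hcard; rewrite leqn0 cards_eq0 => /eqP/setP/(_ (a, b)).
  by rewrite !inE Eab.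
case: (pickP (fun p : A * B => E p.1 p.2)) => [[u0 v0] /= E0|nE]; last first.
  exists (fun x => Posz (enum_rank x)), (fun x => Posz (enum_rank x)); split => //.
  by move=> a a' b b' Eab; move: (nE (a, b)); rewrite /= Eab.
have sym : symmetric (gadj E) by move=> [a|b] [a'|b'].
have irr : irreflexive (gadj E) by move=> [a|b].
have [x [y [exy Hx]]] := leaf_ex sym irr acyc (E0 : gadj E (inl u0) (inr v0)).
have [u [v [Euv leaf]]] : exists u v, E u v /\
    ((forall a, E a v -> a = u) \/ (forall b, E u b -> b = v)).
  case: x y exy Hx => [a|b] [a'|b'] //= Eab H.
  - exists a, b'; split => //; right => b Eb.
    by have := H (inr b) Eb => -[].
  - exists a', b; split => //; left => a Ea.
    by have := H (inl a) Ea => -[].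
pose E2 := fun a b => E a b && ((a != u) || (b != v)).
have E2E : forall a b, E2 a b -> E a b by move=> a b /andP[].
have EE2 : forall a b, E a b -> E2 a b || (a == u) && (b == v).
  by move=> a b Eab; rewrite /E2 Eab /=; case: (a == u); case: (b == v).
have E2uv : forall a b, E2 a b || (a == u) && (b == v) -> E a b.
  by move=> a b /orP[/E2E //|/andP[/eqP-> /eqP->]].
have card2 : (#|[set p : A * B | E2 p.1 p.2]| <= n)%N.
  rewrite -ltnS; apply: leq_trans hcard; apply: proper_card; apply/properP; split.
    by apply/subsetP => p; rewrite !inE => /E2E.
  by exists (u, v); rewrite !inE /= ?Euv // /E2 Euv !eqxx.
have [rA [rB [injA injB H]]] : exists rA rB, [/\ injective rA, injective rB & noncross E2 rA rB].
  apply: IH => //.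
  - by move/(claw_sub E2E).
  - by move/(claw_sub (fun b a => @E2E a b)).
  - move=> c sz; apply/negP => /andP[cy un].
    have := acyc c sz; rewrite /ucycleb un andbT; move/negP; apply.
    by apply: sub_cycle cy => [[a|b] [a'|b']] //= /E2E.
case: leaf => [lB|lA].
  have hv : forall a, ~~ E2 a v.
    by move=> a; apply/negP => /andP[Eav]; rewrite (lB _ Eav) !eqxx.
  have [rA' [rB' [i1 i2 H']]] := ins injA injB H hv (fun c => hc1 (claw_sub E2uv c)).
  by exists rA', rB'; split => //; apply: noncross_sub H'.
have hu : forall b, ~~ E2 u b.
  by move=> b; apply/negP => /andP[Eub]; rewrite (lA _ Eub) !eqxx.
have E2uvT : forall b a, E2 a b || (b == v) && (a == u) -> E a b.
  by move=> b a; rewrite andbC; apply: E2uv.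
have [rB' [rA' [i1 i2 H']]] := ins injB injA (noncross_T H) hu (fun c => hc2 (claw_sub E2uvT c)).
exists rA', rB'; split => //; apply: noncross_sub (noncross_T H').
by move=> a b /EE2; rewrite andbC.
Qed.


Definition rk (T : finType) (le : rel T) (x : T) : nat := #|[pred y | le y x]|.

Lemma rk_lt (T : finType) (le : rel T) : total_order le -> forall x y,
  (rk le x < rk le y)%N = le x y && ~~ le y x.
Proof.
case=> refl anti tr tot x y.
have sub : forall x y, le x y -> (rk le x <= rk le y)%N.
  move=> x1 y1 l; apply: subset_leq_card; apply/subsetP => z; rewrite !inE => h.
  exact: tr h l.
apply/idP/idP.
  move=> l; case: (boolP (le y x)) => h.
    by have := sub _ _ h; rewrite leqNgt l.
  by have := tot x y; rewrite (negbTE h) orbF => ->.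
move=> /andP[l nl]; apply: proper_card; apply/properP; split.
  by apply/subsetP => z; rewrite !inE => h; exact: tr h l.
by exists y; rewrite !inE ?refl.
Qed.

Lemma rk_inj (T : finType) (le : rel T) : total_order le -> injective (rk le).
Proof.
move=> to x y e; have l1 := rk_lt to x y; have l2 := rk_lt to y x.
rewrite e ltnn in l1 l2.
case: to => refl anti tr tot; apply: anti.
move: (tot x y) l1 l2; case: (le x y); case: (le y x) => //.
Qed.

Lemma total_of_rank (T : finType) (r : T -> int) : injective r ->
  total_order (fun x y => r x <= r y).
Proof.
move=> inj; split.
- by move=> x; rewrite lexx.
- by move=> x y /le_anti /inj.
- by move=> y x z; apply: le_trans.
- by move=> x y; apply: le_total.
Qed.

Theorem proposition10 (F : realFieldType) (Th R : finType) (s1 : Th -> R -> F)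
  (hs1 : forall th, is_distr (s1 th)) :
  (exists (leT : rel Th) (leR : rel R),
      total_order leT /\ total_order leR /\ monotone s1 leT leR)
  <-> (acyclic_graph (Gadj s1) /\ ~ forbidden_triple s1).
Proof.
pose E := fun th r => r \in supp s1 th.
have c2f : claw E -> forbidden_triple s1.
  move=> [b [a1 [a2 [a3 [b1 [b2 [b3 [u1 [u2 [[h1 h2 h3] [h4 h5 h6]]]]]]]]]]].
  by right; exists a1, a2, a3, b1, b2, b3, b.
have c1f : claw (fun b a => E a b) -> forbidden_triple s1.
  move=> [b [a1 [a2 [a3 [b1 [b2 [b3 [u1 [u2 [[h1 h2 h3] [h4 h5 h6]]]]]]]]]]].
  by left; exists a1, a2, a3, b1, b2, b3, b.
split.
  move=> [leT [leR [tT [tR mono]]]].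
  pose rA := fun t => Posz (rk leT t).
  pose rB := fun r => Posz (rk leR r).
  have iA : injective rA by move=> x y [] /(rk_inj tT).
  have iB : injective rB by move=> x y [] /(rk_inj tR).
  have H : noncross E rA rB.
    move=> a a' b b' Eab Eab'; rewrite /rA /rB ltz_nat lez_nat rk_lt // => /andP[l nl].
    have := mono _ _ _ _ l nl Eab Eab'.
    case: tR => refl anti tr tot h.
    by apply: subset_leq_card; apply/subsetP => z; rewrite !inE => h2; exact: tr h2 h.
  split.
    move=> c sz; have h := noncross_acyclic iA iB H sz; exact h.
  case=> [f|f].
    apply: (noncross_noclaw iB iA (noncross_T H)); move: f.
    move=> [r1 [r2 [r3 [t1 [t2 [t3 [t4 [u1 [u2 [h1 [h2 [h3 [h4 h5 h6]]]]]]]]]]]]].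
    by exists t4, r1, r2, r3, t1, t2, t3.
  apply: (noncross_noclaw iA iB H); move: f.
  move=> [t1 [t2 [t3 [r1 [r2 [r3 [r4 [u1 [u2 [[h1 h2 h3] [h4 h5 h6]]]]]]]]]]].
  by exists r4, t1, t2, t3, r1, r2, r3.
move=> [acyc nf].
have [rA [rB [iA iB H]]] := @main_ex Th R _ E (leqnn _) (fun c => nf (c2f c))
  (fun c => nf (c1f c)) acyc.
exists (fun x y => rA x <= rA y), (fun x y => rB x <= rB y).
split; first exact: total_of_rank.
split; first exact: total_of_rank.
move=> th th' r r' l nl hr hr'.
by apply: (H _ _ _ _ hr hr'); rewrite ltNge.
Qed.
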